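(* Let $D$ be a digraph in $\mathcal D_{10,3}$ with exactly $33$ edges. Then for all $i,j\in\{10,9,8,7\}$ with $i>j$, $D$ contains the edge from $i$ to $j$.
   Context: For positive integers $v,m$, $\mathcal D_{v,m}$ is the class of all digraphs (without multiple edges) on the vertex set $\{v,v-1,\dots,1\}$ such that every edge $i\to j$ satisfies $i>j$, and $[i]^+\le m+[i]^-$ for every vertex $i$, where $[i]^+$ and $[i]^-$ denote the outdegree and indegree of $i$. *)

(* Defs.v *)
From mathcomp Require Import all_boot.
Set Implicit Arguments. Unset Strict Implicit. Unset Printing Implicit Defensive.

(* A digraph without multiple edges on the vertex set {v, v-1, ..., 1} is
   encoded by its edge set E : {set 'I_v * 'I_v}; the ordinal k : 'I_v
   stands for the vertex with label k+1 (so label order = ordinal order).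
   The pair (i, j) \in E is the edge i -> j. *)
Definition outdeg v (E : {set 'I_v * 'I_v}) (i : 'I_v) : nat :=
  #|[set j : 'I_v | (i, j) \in E]|.
Definition indeg v (E : {set 'I_v * 'I_v}) (i : 'I_v) : nat :=
  #|[set j : 'I_v | (j, i) \in E]|.

Definition in_D v m (E : {set 'I_v * 'I_v}) : Prop :=
  (forall i j : 'I_v, (i, j) \in E -> j < i) /\
  (forall i : 'I_v, outdeg E i <= m + indeg E i).

(* Main.v *)
Require Import Defs.
From mathcomp Require Import all_boot.
From mathcomp Require Import zify.

Lemma card_sum (T : finType) (P : pred T) : #|[set x | P x]| = \sum_x (P x : nat).
Proof.
rewrite -sum1_card big_mkcond /=; apply: eq_bigr => x _; by rewrite inE; case: (P x).
Qed.

Theorem lemma2 (E : {set 'I_10 * 'I_10}) :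
  in_D 3 E -> #|E| = 33 ->
  forall i j : 'I_10, 6 <= i -> 6 <= j -> j < i -> (i, j) \in E.
Proof.
move=> [Hlt Hdeg] HE i0 j0 Hi0 Hj0 Hji.
apply/negPn/negP => Hn.
pose e (p : 'I_10 * 'I_10) : nat := p \in E.
have HE' : \sum_p e p = 33.
  rewrite -HE -sum1_card [RHS]big_mkcond /=; apply: eq_bigr => p _; by rewrite /e; case: (p \in E).
have Hpt : forall p : 'I_10 * 'I_10,
   e p + e p * (6 <= p.2) + (p == (i0, j0)) <=
   e p * (6 <= p.1) + (p.2 < p.1 < 6) + (6 <= p.2 < p.1).
  move=> [i j] /=; rewrite /e.
  case: eqP => [[-> ->]|_]; first by rewrite (negbTE Hn) /=; lia.
  case Hij: ((i, j) \in E) => /=; last by rewrite !mul0n.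
  have := Hlt _ _ Hij; case: (ltnP 5 i); case: (ltnP 5 j) => //= *; lia.
have Hsum : \sum_(p : 'I_10 * 'I_10) (e p + e p * (6 <= p.2) + (p == (i0, j0))) <=
   \sum_(p : 'I_10 * 'I_10) (e p * (6 <= p.1) + (p.2 < p.1 < 6) + (6 <= p.2 < p.1)).
  by apply: leq_sum => p _; exact: Hpt.
rewrite !big_split /= in Hsum.
have H1 : \sum_(p : 'I_10 * 'I_10) (p == (i0, j0) : nat) = 1.
  rewrite (bigD1 (i0, j0)) //= eqxx big1 //; by move=> p /negbTE ->.
have C1 : \sum_(p : 'I_10 * 'I_10) (p.2 < p.1 < 6 : nat) = 15.
  by rewrite -(pair_big xpredT xpredT (fun (i j : 'I_10) => (j < i < 6 : nat))) /= !big_ord_recr !big_ord0.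
have C2 : \sum_(p : 'I_10 * 'I_10) (6 <= p.2 < p.1 : nat) = 6.
  by rewrite -(pair_big xpredT xpredT (fun (i j : 'I_10) => (6 <= j < i : nat))) /= !big_ord_recr !big_ord0.
have HD : \sum_(p : 'I_10 * 'I_10) e p * (6 <= p.1) <= 12 + \sum_(p : 'I_10 * 'I_10) e p * (6 <= p.2).
  have X1 : \sum_(p : 'I_10 * 'I_10) e p * (6 <= p.1) = \sum_(i < 10) \sum_(j < 10) e (i, j) * (6 <= i).
    by rewrite pair_big /=; apply: eq_bigr => [[i j]].
  have X2 : \sum_(p : 'I_10 * 'I_10) e p * (6 <= p.2) = \sum_(i < 10) \sum_(j < 10) e (j, i) * (6 <= i).
    by rewrite exchange_big pair_big /=; apply: eq_bigr => [[i j]].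
  rewrite X1 X2.
  have C3 : \sum_(i < 10) 3 * (6 <= i) = 12 by rewrite !big_ord_recr !big_ord0.
  rewrite -C3 -big_split /=; apply: leq_sum => i _.
  rewrite -!big_distrl /=.
  have := Hdeg i; rewrite /outdeg /indeg !card_sum /e.
  by case: (6 <= i); rewrite ?muln1 ?muln0.
rewrite HE' H1 C1 C2 in Hsum. move: Hsum HD. set X := \sum_(p : _) _ * _. set Y := \sum_(p : _) e p * (5 < p.1). lia.
Qed.
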